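(* There is an absolute constant $C>0$ such that the following holds. Let $n,d,k\ge1$, let $\phi:\mathbb{R}\to\mathbb{R}$ be $L$-Lipschitz with $\phi(0)=0$, let $b>0$, and let $x_1,\dots,x_n,x'_1,\dots,x'_n\in\mathbb{R}^d$ satisfy $\|x_i\|_2,\|x'_i\|_2\le b$. For $a>0$ let $\mathcal{G}^k_a=\{A\in\mathbb{R}^{d\times k}:\|A\|_{2,\infty}\le a\}$. Then $$\widehat{\mathfrak{R}}\big(\mathcal{F}_k(\mathcal{G}^k_a)\big)\le C\left(\frac1n+\frac{a^2b^2\sqrt{k}\,L^2}{\sqrt n}\sqrt{\log(2dk)}\,\log\big(2+n\,b^2a^2L^2\big)\right).$$
   Context: For $A\in\mathbb{R}^{d\times k}$ with columns $A_{\cdot 1},\dots,A_{\cdot k}$: $\|A\|_{2,\infty}=\max_{j\le k}\|A_{\cdot j}\|_2$. For $u,v\in\mathbb{R}^k$, $\zeta_k(u,v)=\frac1k\|u-v\|_2^2$. The function $\phi$ is applied coordinatewise to vectors. Given fixed points $x_1,\dots,x_n,x'_1,\dots,x'_n\in\mathbb{R}^d$ and a set $\mathcal{G}\subset\mathbb{R}^{d\times k}$, define $\mathcal{F}_k(\mathcal{G})=\{(\zeta_k(\phi(A^tx_i),\phi(A^tx'_i)))_{i=1}^n : A\in\mathcal{G}\}\subset\mathbb{R}^n$. For a set $\mathcal{F}\subset\mathbb{R}^n$, $\widehat{\mathfrak{R}}(\mathcal{F})=\frac1n\mathbb{E}_\varepsilon\sup_{f\in\mathcal{F}}\sum_{i=1}^n\varepsilon_if_i$,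 where $\varepsilon_1,\dots,\varepsilon_n$ are i.i.d. uniform on $\{-1,1\}$. *)

(* Defs.v *)
From HB Require Import structures.
From mathcomp Require Import all_boot all_order all_algebra.
From mathcomp Require Import all_classical all_reals.
From mathcomp Require Import exp Rstruct.
From Stdlib Require Import Reals.
Set Implicit Arguments. Unset Strict Implicit. Unset Printing Implicit Defensive.
Import Order.TTheory GRing.Theory Num.Theory.
Local Open Scope ring_scope.
Local Open Scope classical_set_scope.

Notation R := Rdefinitions.R.

Definition vnorm2 (m : nat) (x : 'cV[R]_m) : R :=
  Num.sqrt (\sum_(i < m) x i 0 ^+ 2).

Definition norm2inf (d k : nat) (A : 'M[R]_(d, k)) : R :=
  \big[Num.max/0]_(j < k) vnorm2 (col j A).

Definition zeta (k : nat) (u v : 'cV[R]_k) : R :=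
  k%:R^-1 * (\sum_(j < k) (u j 0 - v j 0) ^+ 2).

Definition cw (phi : R -> R) (m : nat) (u : 'cV[R]_m) : 'cV[R]_m := map_mx phi u.

Definition Fk (n d k : nat) (phi : R -> R) (x x' : 'I_n -> 'cV[R]_d)
  (G : set 'M[R]_(d, k)) : set ('I_n -> R) :=
  [set f | exists2 A, G A &
     f = (fun i => zeta (cw phi (A^T *m x i)) (cw phi (A^T *m x' i)))].

Definition sgn (b : bool) : R := if b then 1 else -1.

(* empirical Rademacher complexity: expectation over the uniform distribution
   on {-1,1}^n written as the average over all 2^n sign vectors *)
Definition rademacher (n : nat) (F : set ('I_n -> R)) : R :=
  n%:R^-1 * ((2 ^+ n)^-1 *
    \sum_(eps : {ffun 'I_n -> bool})
       sup [set s | exists2 f, F f & s = \sum_(i < n) sgn (eps i) * f i]).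

Definition Gka (d k : nat) (a : R) : set 'M[R]_(d, k) :=
  [set A | norm2inf A <= a].

(* Main.v *)
Require Import Defs.
From HB Require Import structures.
From mathcomp Require Import all_boot all_order all_algebra.
From mathcomp Require Import all_classical all_reals.
From mathcomp Require Import exp Rstruct.
From mathcomp Require Import ring lra.
Import Order.TTheory GRing.Theory Num.Theory.
Local Open Scope ring_scope.
Local Open Scope classical_set_scope.

Section Gen.
Variable n : nat.
Notation sv := {ffun 'I_n -> bool}.

Definition Ev (F : sv -> R) : R := (2 ^+ n)^-1 * \sum_(e : sv) F e.

Lemma card_sv : #|{: sv}| = (2 ^ n)%N.
Proof. by rewrite card_ffun card_bool card_ord. Qed.

Lemma two_n_gt0 : 0 < (2 ^+ n : R).
Proof. by apply: exprn_gt0. Qed.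

Lemma Ev_le F G : (forall e, F e <= G e) -> Ev F <= Ev G.
Proof.
move=> h; rewrite /Ev ler_wpM2l //; first by rewrite invr_ge0 ltW // two_n_gt0.
by apply: ler_sum => e _; exact: h.
Qed.

Lemma Ev_add F G : Ev (fun e => F e + G e) = Ev F + Ev G.
Proof. by rewrite /Ev big_split /= mulrDr. Qed.

Lemma Ev_scale c F : Ev (fun e => c * F e) = c * Ev F.
Proof. by rewrite /Ev -mulr_sumr mulrCA. Qed.

Lemma Ev_const c : Ev (fun _ => c) = c.
Proof.
rewrite /Ev sumr_const card_sv -[c *+ _]mulr_natl natrX mulrA mulVf ?mul1r //.
by rewrite gt_eqF // two_n_gt0.
Qed.

Definition flip (j : 'I_n) (e : sv) : sv := [ffun i => if i == j then ~~ e i else e i].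

Lemma flipK j : involutive (flip j).
Proof.
move=> e; apply/ffunP => i; rewrite !ffunE; case: eqP => // _; exact: negbK.
Qed.

Lemma flip_j j e : flip j e j = ~~ e j.
Proof. by rewrite ffunE eqxx. Qed.

Lemma flip_ne j e i : i != j -> flip j e i = e i.
Proof. by rewrite ffunE => /negPf ->. Qed.

Lemma sum_flip j (F : sv -> R) : \sum_e F e = \sum_e F (flip j e).
Proof. exact: (reindex_inj (inv_inj (flipK j))). Qed.

Definition negall (e : sv) : sv := [ffun i => ~~ e i].
Lemma negallK : involutive negall.
Proof. by move=> e; apply/ffunP => i; rewrite !ffunE negbK. Qed.

Lemma Ev_negall F : Ev F = Ev (fun e => F (negall e)).
Proof. by rewrite /Ev (reindex_inj (inv_inj negallK)). Qed.

Lemma sgn_neg b : sgn (~~ b) = - sgn b.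
Proof. by case: b => /=; rewrite ?opprK. Qed.

Variable T : Type.
Definition Gsum (u : T -> 'I_n -> R) (t : sv -> T) (e : sv) : R :=
  \sum_(i < n) sgn (e i) * u (t e) i.
Definition P (G : set T) (u : T -> 'I_n -> R) (X : R) :=
  forall t : sv -> T, (forall e, G (t e)) -> Ev (Gsum u t) <= X.

Lemma P_le G u X Y : X <= Y -> P G u X -> P G u Y.
Proof. by move=> XY h t Ht; apply: le_trans (h t Ht) XY. Qed.

Lemma P_ext G u u' X : (forall s i, G s -> u s i = u' s i) -> P G u X -> P G u' X.
Proof.
move=> E h t Ht; apply: le_trans (h t Ht); apply: Ev_le => e.
by rewrite /Gsum; rewrite le_eqVlt; apply/orP; left; apply/eqP/eq_bigr => i _; rewrite E.
Qed.

Lemma P_scale G u X c : 0 <= c -> P G u X -> P G (fun s i => c * u s i) (c * X).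
Proof.
move=> c0 h t Ht.
have -> : Gsum (fun s i => c * u s i) t = fun e => c * Gsum u t e.
  by apply: funext => e; rewrite /Gsum mulr_sumr; apply: eq_bigr => i _; rewrite mulrCA.
by rewrite Ev_scale ler_wpM2l // h.
Qed.

Lemma P_add G p q X1 X2 : P G p X1 -> P G q X2 ->
  P G (fun s i => p s i + q s i) (X1 + X2).
Proof.
move=> h1 h2 t Ht.
have -> : Gsum (fun s i => p s i + q s i) t = fun e => Gsum p t e + Gsum q t e.
  by apply: funext => e; rewrite /Gsum -big_split; apply: eq_bigr => i _; rewrite mulrDr.
by rewrite Ev_add lerD // ?h1 ?h2.
Qed.

Lemma P_opp G q X : P G q X -> P G (fun s i => - q s i) X.
Proof.
move=> h t Ht; rewrite Ev_negall.
have -> : (fun e => Gsum (fun s i => - q s i) t (negall e)) = Gsum q (fun e => t (negall e)).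
  apply: funext => e; rewrite /Gsum; apply: eq_bigr => i _.
  by rewrite ffunE sgn_neg mulrNN.
by apply: h => e.
Qed.


Lemma Ev_flip j F : Ev F = 2^-1 * Ev (fun e => F e + F (flip j e)).
Proof.
rewrite Ev_add.
have -> : Ev (fun e => F (flip j e)) = Ev F by rewrite /Ev -(sum_flip j).
lra.
Qed.

Lemma contraction G u v X :
  (forall s s' i, G s -> G s' -> `|v s i - v s' i| <= `|u s i - u s' i|) ->
  P G u X -> P G v X.
Proof.
move=> Hl hu.
pose w m s (i : 'I_n) := if (i < m)%N then v s i else u s i.
suff: forall m, P G (w m) X.
  by move/(_ n); apply: P_ext => s i _; rewrite /w ltn_ord.
elim => [|m IH].
  by apply: P_ext hu => s i _; rewrite /w.
case: (ltnP m n) => hm; last first.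
  apply: P_ext IH => s i _; rewrite /w.
  have h1 : (i < m)%N by apply: leq_trans (ltn_ord i) hm.
  by rewrite h1 ltnS ltnW.
set j := Ordinal hm.
move=> t Ht.
pose ep (e : sv) : sv := if e j then e else flip j e.
pose cond (e : sv) := u (t (flip j (ep e))) j <= u (t (ep e)) j.
pose t' (e : sv) := if cond e then t e else t (flip j e).
have Ht' : forall e, G (t' e) by move=> e; rewrite /t'; case: ifP.
apply: le_trans (IH t' Ht').
pose R s (e : sv) := \sum_(i < n | i != j) sgn (e i) * w m s i.
have wj1 s : w m.+1 s j = v s j by rewrite /w /= ltnSn.
have wj0 s : w m s j = u s j by rewrite /w /= ltnn.
have wne s i : i != j -> w m.+1 s i = w m s i.
  move=> ij; rewrite /w ltnS leq_eqVlt.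
  have -> : (nat_of_ord i == m) = false.
    by apply/negP => /eqP h; move/negP: ij; apply; apply/eqP/val_inj.
  by [].
have spl1 e : Gsum (w m.+1) t e = sgn (e j) * v (t e) j + R (t e) e.
  rewrite /Gsum (bigD1 j) //= wj1; congr (_ + _); apply: eq_bigr => i ij.
  by rewrite wne.
have spl0 e : Gsum (w m) t' e = sgn (e j) * u (t' e) j + R (t' e) e.
  by rewrite /Gsum (bigD1 j) //= wj0.
have Rf s e : R s (flip j e) = R s e.
  by apply: eq_bigr => i ij; rewrite flip_ne.
have key1 (e : sv) : e j ->
  Gsum (w m.+1) t e + Gsum (w m.+1) t (flip j e) <=
  Gsum (w m) t' e + Gsum (w m) t' (flip j e).
  move=> ej.
  have epe : ep e = e by rewrite /ep ej.
  have epf : ep (flip j e) = e by rewrite /ep flip_j ej /= flipK.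
  rewrite !spl1 !spl0 !Rf flip_j ej /=.
  have cf : cond (flip j e) = cond e by rewrite /cond epf epe.
  rewrite /t' cf flipK.
  have hc0 : cond e = (u (t (flip j e)) j <= u (t e) j) by rewrite /cond epe.
  rewrite hc0.
  have hL := Hl (t e) (t (flip j e)) j (Ht _) (Ht _).
  have hn := ler_norm (v (t e) j - v (t (flip j e)) j).
  case: ifP => hc.
    have : `|u (t e) j - u (t (flip j e)) j| = u (t e) j - u (t (flip j e)) j.
      by apply: ger0_norm; rewrite subr_ge0.
    move=> E; rewrite E in hL; rewrite /sgn; lra.
  have : `|u (t e) j - u (t (flip j e)) j| = - (u (t e) j - u (t (flip j e)) j).
    by apply: ltr0_norm; rewrite subr_lt0 ltNge hc.
  move=> E; rewrite E in hL; rewrite /sgn; lra.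
have key (e : sv) : Gsum (w m.+1) t e + Gsum (w m.+1) t (flip j e) <=
  Gsum (w m) t' e + Gsum (w m) t' (flip j e).
  case ej: (e j); first exact: key1.
  have := key1 (flip j e); rewrite flip_j ej flipK => /(_ isT).
  by rewrite addrC [X in _ <= X]addrC.
rewrite (Ev_flip j) [X in _ <= X](Ev_flip j) ler_wpM2l //; last exact: Ev_le.
by rewrite invr_ge0.
Qed.

End Gen.
Arguments Ev {n}. Arguments flip {n}. Arguments negall {n}. Arguments Gsum {n T}. Arguments P {n T}.
Arguments Ev_le {n}. Arguments Ev_add {n}. Arguments Ev_scale {n}. Arguments Ev_const {n}.
Arguments sum_flip {n}. Arguments Ev_flip {n}. Arguments flip_j {n}. Arguments flip_ne {n}.
Arguments flipK {n}. Arguments contraction {n T}. Arguments P_le {n T}. Arguments P_ext {n T}.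
Arguments P_scale {n T}. Arguments P_add {n T}. Arguments P_opp {n T}. Arguments Ev_negall {n}.

Lemma amgm_term (c y lam : R) : 0 < lam -> 2 * `|c * y| <= lam * c ^+ 2 + y ^+ 2 / lam.
Proof.
move=> hl.
have hy : y = lam * (y / lam) by rewrite mulrC divfK // gt_eqF.
set z := y / lam in hy *. clearbody z.
have hz : (lam * z) ^+ 2 / lam = lam * z ^+ 2 by field; rewrite gt_eqF.
rewrite hy hz !normrM (gtr0_norm hl).
have h1 : 0 <= lam * (`|c| - `|z|) ^+ 2 by apply: mulr_ge0; [apply: ltW | apply: sqr_ge0].
have h2 : `|c| ^+ 2 = c ^+ 2 by rewrite real_normK ?num_real.
have h3 : `|z| ^+ 2 = z ^+ 2 by rewrite real_normK ?num_real.
rewrite -h2 -h3 -subr_ge0.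
have -> : lam * `|c| ^+ 2 + lam * `|z| ^+ 2 - 2 * (`|c| * (lam * `|z|)) = lam * (`|c| - `|z|) ^+ 2 by ring.
exact: h1.
Qed.

Lemma amgm d (f g : 'I_d -> R) (lam : R) : 0 < lam ->
  2 * `|\sum_(l < d) f l * g l| <=
  lam * \sum_(l < d) f l ^+ 2 + (\sum_(l < d) g l ^+ 2) / lam.
Proof.
move=> hl.
apply: le_trans (_ : 2 * \sum_l `|f l * g l| <= _).
  by rewrite ler_wpM2l // ler_norm_sum.
rewrite mulr_sumr mulr_sumr mulr_suml -big_split /=.
by apply: ler_sum => l _; exact: amgm_term.
Qed.

Lemma dot_bound d (f g : 'I_d -> R) (a b : R) : 0 < a -> 0 < b ->
  \sum_(l < d) f l ^+ 2 <= a ^+ 2 -> \sum_(l < d) g l ^+ 2 <= b ^+ 2 ->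
  `|\sum_(l < d) f l * g l| <= a * b.
Proof.
move=> ha hb hf hg.
have h := amgm _ f g (b / a) (divr_gt0 hb ha).
have h1 : b / a * \sum_l f l ^+ 2 <= b / a * a ^+ 2.
  by rewrite ler_wpM2l // ltW // divr_gt0.
have h2 : (\sum_l g l ^+ 2) / (b / a) <= b ^+ 2 / (b / a).
  by rewrite ler_wpM2r // invr_ge0 ltW // divr_gt0.
have e1 : b / a * a ^+ 2 = a * b by field; rewrite gt_eqF.
have e2 : b ^+ 2 / (b / a) = a * b by field; rewrite !gt_eqF.
rewrite e1 in h1; rewrite e2 in h2; lra.
Qed.

Lemma sq_of_vnorm d (x : 'cV[R]_d) (b : R) : vnorm2 x <= b ->
  \sum_(l < d) x l 0 ^+ 2 <= b ^+ 2.
Proof.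
rewrite /vnorm2 => h.
have h0 : 0 <= \sum_(l < d) x l 0 ^+ 2 by apply: sumr_ge0 => l _; exact: sqr_ge0.
rewrite -(sqr_sqrtr h0).
have hs := sqrtr_ge0 (\sum_(l < d) x l 0 ^+ 2).
nra.
Qed.

Lemma Ev_sum n (I : finType) (F : I -> {ffun 'I_n -> bool} -> R) :
  Ev (fun e => \sum_(j : I) F j e) = \sum_(j : I) Ev (F j).
Proof. by rewrite /Ev exchange_big /= mulr_sumr. Qed.

Lemma Ev_sgn2 n (i i' : 'I_n) :
  Ev (fun e => sgn (e i) * sgn (e i')) = if i == i' then 1 else 0.
Proof.
case: eqP => [<-|ne].
  rewrite -(@Ev_const n 1); congr Ev; apply: funext => e.
  by case: (e i); rewrite /sgn ?mulr1 ?mulrNN ?mulr1.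
set F := fun e : {ffun 'I_n -> bool} => sgn (e i) * sgn (e i').
have h : Ev F = - Ev F.
  rewrite {1}/Ev (sum_flip i) -mulrN -sumrN; congr (_ * _); apply: eq_bigr => e _.
  rewrite /F flip_j flip_ne; last by apply/eqP => h; apply: ne; rewrite h.
  by rewrite sgn_neg mulNr.
lra.
Qed.

Lemma Ev_sq n (y : 'I_n -> R) :
  Ev (fun e => (\sum_(i < n) sgn (e i) * y i) ^+ 2) = \sum_(i < n) y i ^+ 2.
Proof.
have -> : (fun e : {ffun 'I_n -> bool} => (\sum_(i < n) sgn (e i) * y i) ^+ 2) =
  (fun e => \sum_(i < n) \sum_(i' < n) (y i * y i') * (sgn (e i) * sgn (e i'))).
  apply: funext => e; rewrite expr2 mulr_suml; apply: eq_bigr => i _.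
  rewrite mulr_sumr; apply: eq_bigr => i' _; ring.
rewrite Ev_sum; apply: eq_bigr => i _.
rewrite Ev_sum (bigD1 i) //= big1 => [|i' ne].
  by rewrite Ev_scale Ev_sgn2 eqxx mulr1 addr0 expr2.
rewrite Ev_scale Ev_sgn2.
have -> : (i == i') = false by apply/negP => /eqP h; move/negP: ne; apply; rewrite h.
by rewrite mulr0.
Qed.

Definition dot d (c y : 'cV[R]_d) : R := \sum_(l < d) c l 0 * y l 0.
Arguments dot {d}.

Lemma lin_bound n d (x : 'I_n -> 'cV[R]_d) (a b L : R) :
  0 < a -> 0 < b -> 0 <= L -> (1 <= n)%N -> (forall i, vnorm2 (x i) <= b) ->
  P (fun c : 'cV[R]_d => vnorm2 c <= a) (fun c i => L * dot c (x i))
    (L * a * b * Num.sqrt (n%:R : R)).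
Proof.
move=> ha hb hL hn hx t Ht.
pose s (e : {ffun 'I_n -> bool}) (l : 'I_d) := \sum_(i < n) sgn (e i) * x i l 0.
have hs : Gsum (fun c i => L * dot c (x i)) t = fun e => L * \sum_(l < d) t e l 0 * s e l.
  apply: funext => e; rewrite /Gsum /dot /s.
  under eq_bigr => i _ do rewrite mulrCA mulr_sumr.
  rewrite -mulr_sumr exchange_big /=; congr (_ * _); apply: eq_bigr => l _.
  by rewrite mulr_sumr; apply: eq_bigr => i _; ring.
have sn : 0 < Num.sqrt (n%:R : R) by rewrite sqrtr_gt0 ltr0n.
pose lam := b * Num.sqrt (n%:R : R) / a.
have hlam : 0 < lam by rewrite /lam divr_gt0 // mulr_gt0.
have pw e : L * \sum_(l < d) t e l 0 * s e l <=
    L * lam * a ^+ 2 / 2 + L / (2 * lam) * \sum_(l < d) s e l ^+ 2.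
  have h := amgm _ (fun l => t e l 0) (s e) lam hlam.
  have hc := sq_of_vnorm _ _ _ (Ht e).
  have h1 := ler_norm (\sum_(l < d) t e l 0 * s e l).
  have h2 : lam * \sum_(l < d) t e l 0 ^+ 2 <= lam * a ^+ 2 by rewrite ler_wpM2l // ltW.
  have h3 : \sum_(l < d) t e l 0 * s e l <= (lam * a ^+ 2 + (\sum_(l < d) s e l ^+ 2) / lam) / 2.
    lra.
  apply: le_trans (ler_wpM2l hL h3) _.
  rewrite le_eqVlt; apply/orP; left; apply/eqP; by field; rewrite ?gt_eqF.
rewrite hs; apply: le_trans (Ev_le _ _ pw) _.
rewrite Ev_add Ev_const Ev_scale Ev_sum.
have hsum : \sum_(l < d) Ev (fun e => s e l ^+ 2) <= n%:R * b ^+ 2.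
  under eq_bigr => l _ do rewrite (Ev_sq n (fun i => x i l 0)).
  rewrite exchange_big /=.
  apply: le_trans (_ : \sum_(i < n) b ^+ 2 <= _).
    by apply: ler_sum => i _; apply: sq_of_vnorm.
  by rewrite sumr_const card_ord mulr_natl.
have hc : 0 <= L / (2 * lam) by rewrite divr_ge0 // ltW // mulr_gt0.
apply: le_trans (_ : L * lam * a ^+ 2 / 2 + L / (2 * lam) * (n%:R * b ^+ 2) <= _).
  by rewrite lerD2l ler_wpM2l.
have nn : n%:R = Num.sqrt (n%:R : R) ^+ 2 by rewrite sqr_sqrtr // ler0n.
rewrite {1}nn /lam le_eqVlt; apply/orP; left; apply/eqP; field.
by rewrite !gt_eqF.
Qed.

Definition hfun n d (phi : R -> R) (x x' : 'I_n -> 'cV[R]_d) (c : 'cV[R]_d) (i : 'I_n) : R :=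
  (phi (dot c (x i)) - phi (dot c (x' i))) ^+ 2.
Arguments hfun {n d}.

Lemma gdecomp n d k (phi : R -> R) (x x' : 'I_n -> 'cV[R]_d) (A : 'M[R]_(d, k)) i :
  zeta (cw phi (A^T *m x i)) (cw phi (A^T *m x' i)) =
  k%:R^-1 * \sum_(j < k) hfun phi x x' (col j A) i.
Proof.
rewrite /zeta /cw /hfun; congr (_ * _); apply: eq_bigr => j _.
rewrite !mxE /dot; congr ((phi _ - phi _) ^+ 2); apply: eq_bigr => l _; by rewrite !mxE.
Qed.

Lemma col_ball d k (A : 'M[R]_(d, k)) a j : norm2inf A <= a -> vnorm2 (col j A) <= a.
Proof.
move=> h; apply: le_trans h; rewrite /norm2inf.
exact: (le_bigmax 0 (fun j => vnorm2 (col j A)) j).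
Qed.

Lemma col_step n d k (phi : R -> R) (x x' : 'I_n -> 'cV[R]_d) (a X : R) :
  (1 <= k)%N ->
  P (fun c : 'cV[R]_d => vnorm2 c <= a) (hfun phi x x') X ->
  P (@Gka d k a) (fun A i => zeta (cw phi (A^T *m x i)) (cw phi (A^T *m x' i))) X.
Proof.
move=> hk hP t Ht.
have E : Gsum (fun A i => zeta (cw phi (A^T *m x i)) (cw phi (A^T *m x' i))) t =
  fun e => k%:R^-1 * \sum_(j < k) Gsum (hfun phi x x') (fun e => col j (t e)) e.
  apply: funext => e; rewrite /Gsum.
  under eq_bigr => i _ do rewrite gdecomp mulrCA mulr_sumr.
  by rewrite -mulr_sumr exchange_big.
rewrite E Ev_scale Ev_sum.
have hk0 : 0 < (k%:R : R) by rewrite ltr0n.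
apply: le_trans (_ : k%:R^-1 * \sum_(j < k) X <= _).
  apply: ler_wpM2l; first by rewrite invr_ge0 ltW.
  apply: ler_sum => j _.
  by apply: hP => e; apply: col_ball; apply: Ht.
rewrite sumr_const card_ord -[X *+ _]mulr_natl mulrA mulVf ?mul1r // gt_eqF //.
Qed.

Lemma ball_step n d (phi : R -> R) (x x' : 'I_n -> 'cV[R]_d) (a b L : R) :
  (1 <= n)%N -> (forall s t : R, `|phi s - phi t| <= L * `|s - t|) -> phi 0 = 0 ->
  0 < a -> 0 < b -> 0 <= L ->
  (forall i, vnorm2 (x i) <= b) -> (forall i, vnorm2 (x' i) <= b) ->
  P (fun c : 'cV[R]_d => vnorm2 c <= a) (hfun phi x x')
    (8 * L ^+ 2 * a ^+ 2 * b ^+ 2 * Num.sqrt (n%:R : R)).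
Proof.
move=> hn hphi h0 ha hb hL hx hx'.
set ball := fun c : 'cV[R]_d => vnorm2 c <= a.
set Y := L * a * b * Num.sqrt (n%:R : R).
have lipc (y : 'I_n -> 'cV[R]_d) : (forall i, vnorm2 (y i) <= b) ->
    P ball (fun c i => phi (dot c (y i))) Y.
  move=> hy; apply: contraction (lin_bound _ _ _ _ _ _ ha hb hL hn hy).
  move=> s s' i _ _; rewrite -mulrBr normrM (ger0_norm hL); exact: hphi.
have hw := P_add _ _ _ _ _ (lipc _ hx) (P_opp _ _ _ (lipc _ hx')).
set B := 2 * (L * (a * b)).
have hB : 0 <= 2 * B by rewrite !mulr_ge0 // ltW.
have hs := P_scale _ _ _ (2 * B) hB hw.
have wb (y : 'I_n -> 'cV[R]_d) c i : (forall i, vnorm2 (y i) <= b) -> ball c ->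
    `|phi (dot c (y i))| <= L * (a * b).
  move=> hy hc.
  have := hphi (dot c (y i)) 0; rewrite h0 !subr0 => h.
  apply: le_trans h _; apply: ler_wpM2l => //.
  apply: dot_bound => //; apply: sq_of_vnorm => //; exact: hy.
have -> : 8 * L ^+ 2 * a ^+ 2 * b ^+ 2 * Num.sqrt (n%:R : R) = 2 * B * (Y + Y).
  by rewrite /B /Y; ring.
apply: contraction hs => s s' i hs1 hs2.
rewrite /hfun.
set w1 := phi (dot s (x i)) - phi (dot s (x' i)).
set w2 := phi (dot s' (x i)) - phi (dot s' (x' i)).
have hw1 : `|w1| <= B.
  apply: le_trans (ler_normB _ _) _; rewrite /B.
  have := wb x s i hx hs1; have := wb x' s i hx' hs1; lra.
have hw2 : `|w2| <= B.
  apply: le_trans (ler_normB _ _) _; rewrite /B.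
  have := wb x s' i hx hs2; have := wb x' s' i hx' hs2; lra.
have -> : w1 ^+ 2 - w2 ^+ 2 = (w1 - w2) * (w1 + w2) by ring.
have -> : 2 * B * w1 - 2 * B * w2 = (2 * B) * (w1 - w2) by ring.
rewrite [`|_ * (w1 - w2)|]normrM (ger0_norm hB) normrM mulrC ler_wpM2r //.
apply: le_trans (ler_normD _ _) _; lra.
Qed.

Lemma ln2_ge : 1 / 2 <= ln (2 : R).
Proof.
have h : ln (1 + (- (1 / 2)) : R) <= - (1 / 2) by apply: le_ln1Dx; lra.
have e : (1 + - (1 / 2) : R) = 2^-1 by field.
rewrite e lnV ?posrE // in h; lra.
Qed.

Lemma ln_ge_half (y : R) : 2 <= y -> 1 / 2 <= ln y.
Proof.
move=> hy; apply: le_trans ln2_ge _.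
by rewrite ler_ln ?posrE //; lra.
Qed.

Theorem corollary1 :
  exists C : R, 0 < C /\
  forall (n d k : nat), (1 <= n)%N -> (1 <= d)%N -> (1 <= k)%N ->
  forall (phi : R -> R) (L : R),
    (forall s t : R, `|phi s - phi t| <= L * `|s - t|) -> phi 0 = 0 ->
  forall (b : R), 0 < b ->
  forall (x x' : 'I_n -> 'cV[R]_d),
    (forall i, vnorm2 (x i) <= b) -> (forall i, vnorm2 (x' i) <= b) ->
  forall (a : R), 0 < a ->
    rademacher (Fk phi x x' (@Gka d k a)) <=
      C * (n%:R^-1 +
           a ^+ 2 * b ^+ 2 * Num.sqrt k%:R * L ^+ 2 / Num.sqrt n%:R
           * Num.sqrt (ln (2 * d%:R * k%:R))
           * ln (2 + n%:R * b ^+ 2 * a ^+ 2 * L ^+ 2)).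
Proof.
exists 32; split; first by [].
move=> n d k hn hd hk phi L hphi h0 b hb x x' hx hx' a ha.
have hL : 0 <= L.
  have := hphi 1 0; rewrite subr0 normr1 mulr1 => h; apply: le_trans h; exact: normr_ge0.
set X := 8 * L ^+ 2 * a ^+ 2 * b ^+ 2 * Num.sqrt (n%:R : R).
have hP := col_step n d k phi x x' a X hk (ball_step n d phi x x' a b L hn hphi h0 ha hb hL hx hx').
set g := fun (A : 'M[R]_(d, k)) (i : 'I_n) => zeta (cw phi (A^T *m x i)) (cw phi (A^T *m x' i)).
set S := fun e : {ffun 'I_n -> bool} =>
  [set s | exists2 f, Fk phi x x' (@Gka d k a) f & s = \sum_(i < n) sgn (e i) * f i].
have hsup : Ev (fun e => sup (S e)) <= X.
  apply/ler_addgt0Pr => del hdel.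
  have ex : forall e, exists A : 'M[R]_(d, k),
      Gka a A /\ sup (S e) - del <= \sum_(i < n) sgn (e i) * g A i.
    move=> e; case: (pselect (has_sup (S e))) => hs.
      have [s [f [A hA ->] ->] hlt] := sup_adherent hdel hs.
      by exists A; split => //; apply: ltW.
    exists 0; split.
      rewrite /Gka /=; apply/bigmax_leP; split; first exact: ltW.
      move=> j _; rewrite /vnorm2.
      have -> : \sum_(i < d) (col j (0 : 'M[R]_(d, k))) i 0 ^+ 2 = 0.
        by apply: big1 => i _; rewrite !mxE expr0n.
      by rewrite sqrtr0 ltW.
    rewrite sup_out // big1 => [|i _]; first by rewrite sub0r oppr_le0 ltW.
    rewrite /g gdecomp big1 ?mulr0 // => j _.
    rewrite /hfun /dot big1 => [|l _]; last by rewrite !mxE mul0r.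
    by rewrite big1 => [|l _]; [rewrite subrr expr0n | rewrite !mxE mul0r].
  have [t Ht] := choice ex.
  apply: le_trans (_ : Ev (fun e => Gsum g t e + del) <= _).
    apply: Ev_le => e; have [_ h] := Ht e; rewrite /Gsum; lra.
  rewrite Ev_add Ev_const lerD2r; apply: hP => e; exact: (Ht e).1.
have hrad : rademacher (Fk phi x x' (@Gka d k a)) = n%:R^-1 * Ev (fun e => sup (S e)) by [].
rewrite hrad.
have hn0 : 0 < (n%:R : R) by rewrite ltr0n.
apply: le_trans (_ : n%:R^-1 * X <= _).
  by rewrite ler_wpM2l // invr_ge0 ltW.
have sn : 0 < Num.sqrt (n%:R : R) by rewrite sqrtr_gt0.
set Q := a ^+ 2 * b ^+ 2 * L ^+ 2 / Num.sqrt (n%:R : R).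
have hQ : 0 <= Q.
  rewrite /Q; apply: divr_ge0; last exact: ltW.
  by apply: mulr_ge0; [apply: mulr_ge0|]; apply: sqr_ge0.
have eX : n%:R^-1 * X = 8 * Q.
  rewrite /X /Q.
  have nn : (n%:R : R) = Num.sqrt (n%:R : R) ^+ 2 by rewrite sqr_sqrtr // ler0n.
  by rewrite {1}nn; field; rewrite gt_eqF.
rewrite eX.
have sk : 1 <= Num.sqrt (k%:R : R).
  apply: (le_trans (_ : 1 <= Num.sqrt 1)); first by rewrite sqrtr1.
  by apply: ler_wsqrtr; rewrite ler1n.
have sl : 1 / 2 <= Num.sqrt (ln (2 * d%:R * k%:R : R)).
  have h : 1 / 2 <= ln (2 * d%:R * k%:R : R).
    apply: ln_ge_half.
    have hd1 : 1 <= (d%:R : R) by rewrite ler1n.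
    have hk1 : 1 <= (k%:R : R) by rewrite ler1n.
    nra.
  have e : (1 / 2 : R) = Num.sqrt ((1 / 2) ^+ 2) by rewrite sqrtr_sqr ger0_norm // divr_ge0.
  rewrite e; apply: ler_wsqrtr; lra.
have ll : 1 / 2 <= ln (2 + n%:R * b ^+ 2 * a ^+ 2 * L ^+ 2 : R).
  apply: ln_ge_half.
  have : 0 <= (n%:R * b ^+ 2 * a ^+ 2 * L ^+ 2 : R).
    by apply: mulr_ge0; [apply: mulr_ge0; [apply: mulr_ge0; [apply: ler0n|apply: sqr_ge0]|apply: sqr_ge0]|apply: sqr_ge0].
  lra.
have eq2 : a ^+ 2 * b ^+ 2 * Num.sqrt (k%:R : R) * L ^+ 2 / Num.sqrt (n%:R : R) =
  Q * Num.sqrt (k%:R : R) by rewrite /Q; field; rewrite gt_eqF.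
rewrite eq2.
set sK := Num.sqrt (k%:R : R) in sk *.
set sL := Num.sqrt (ln (2 * d%:R * k%:R : R)) in sl *.
set lL := ln (2 + n%:R * b ^+ 2 * a ^+ 2 * L ^+ 2 : R) in ll *.
have hni : 0 <= (n%:R : R)^-1 by rewrite invr_ge0 ltW.
have h1 : Q <= Q * sK by rewrite -{1}(mulr1 Q) ler_wpM2l.
have h2 : Q * (1 / 2) <= Q * sK * sL.
  apply: le_trans (_ : Q * sK * (1 / 2) <= _); first by rewrite ler_wpM2r //; lra.
  by rewrite ler_wpM2l // (le_trans hQ h1).
have h3 : Q * sK * sL * (1 / 2) <= Q * sK * sL * lL.
  rewrite ler_wpM2l //; apply: mulr_ge0; [exact: le_trans hQ h1 | lra].
nra.
Qed.
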